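(* For $t\in\{0,1\}$ and $x\in\mathcal X$, $\Pr(Y^*=1\mid T^*=t,X^*=x)=\frac{r(x,p_0)\Pi(t\mid 1,x)}{\Pi(t\mid 0,x)+r(x,p)\{\Pi(t\mid 1,x)-\Pi(t\mid 0,x)\}}$, where $p=p_0$ under Design 1 and $p=0$ under Design 2.
   Context: Population variables: $Y^*\in\{0,1\}$, $T^*\in\{0,1\}$, covariate vector $X^*$; $p_0:=\Pr(Y^*=1)$. The observed vector $(Y,T,X)$ arises from Bernoulli sampling: $Y\in\{0,1\}$ is drawn with known probability $h_0:=\Pr(Y=1)\in(0,1)$, and given $Y=y$, $(T,X)$ is drawn from a distribution $\mathcal P_y$. Densities (or mass functions) are denoted by $f$. Design 1 (case-control): for all $t\in\{0,1\}$, $x\in\mathcal X$, $y\in\{0,1\}$, $f_{X|Y}(x\mid y)=f_{X^*|Y^*}(x\mid y)$ and $\Pr(T=t\mid X=x,Y=y)=\Pr(T^*=t\mid X^*=x,Y^*=y)$. Design 2 (case-population): for all $t,x$, $f_{X|Y}(x\mid 0)=f_{X^*}(x)$, $\Pr(T=t\mid X=x,Y=0)=\Pr(T^*=t\mid X^*=x)$, $f_{X|Y}(x\mid 1)=f_{X^*|Y^*}(x\mid 1)$, $\Pr(T=t\mid X=x,Y=1)=\Pr(T^*=t\mid X^*=x,Y^*=1)$. Standing common support assumption: the support of $X^*$ and that of $X$ given $Y=y$ for $y=0,1$ coincide; call it $\mathcal X$. Let $\Pi(t\mid y,x):=\Pr(T=t\mid Y=y,X=x)$, assumed nonzero for all $t,y$.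 For $p\in[0,1]$, under Design 1, $r(x,p):=\frac{p(1-h_0)\Pr(Y=1\mid X=x)}{p(1-h_0)\Pr(Y=1\mid X=x)+h_0(1-p)\Pr(Y=0\mid X=x)}$, and under Design 2, $r(x,p):=\frac{p(1-h_0)}{h_0}\frac{\Pr(Y=1\mid X=x)}{\Pr(Y=0\mid X=x)}$. *)

(* Defs.v *)
From HB Require Import structures.
From mathcomp Require Import all_boot all_order all_algebra.
From mathcomp Require Import all_classical all_reals all_analysis.
Set Implicit Arguments. Unset Strict Implicit. Unset Printing Implicit Defensive.
Import Order.TTheory GRing.Theory Num.Theory.
Local Open Scope ring_scope.

(* Convention: booleans encode {0,1}: false = 0, true = 1.
   All distributions are given by densities w.r.t. a reference measure mu on
   the covariate space X (counting measure on the binary coordinates), so that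
   both the discrete ("mass function") and continuous cases are covered. *)

Inductive design := CaseControl (* Design 1 *) | CasePopulation (* Design 2 *).

Section Defs.
Variables (R : realType) (d : measure_display) (X : measurableType d).
Variable (mu : {measure set X -> \bar R}).

(* Population: fs y t x = joint density of (Ys,Ts,Xs) [the starred population variables] at (y,t,x). *)
Definition margX (fs : bool -> bool -> X -> R) (x : X) : R :=
  fs false false x + fs false true x + fs true false x + fs true true x.

Definition is_pop_density (fs : bool -> bool -> X -> R) : Prop :=
  (forall y t x, 0 <= fs y t x) /\
  (forall y t, measurable_fun setT (fs y t)) /\
  (\int[mu]_x (margX fs x)%:E = 1)%E.

Definition PrYs (fs : bool -> bool -> X -> R) (y : bool) : R :=
  fine (\int[mu]_x (fs y false x + fs y true x)%:E)%E.

Definition p0 (fs : bool -> bool -> X -> R) : R := PrYs fs true.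

Definition fXs_Ys (fs : bool -> bool -> X -> R) (x : X) (y : bool) : R :=
  (fs y false x + fs y true x) / PrYs fs y.

Definition fXs (fs : bool -> bool -> X -> R) (x : X) : R := margX fs x.

Definition PrTs_XsYs (fs : bool -> bool -> X -> R) (t : bool) (x : X) (y : bool) : R :=
  fs y t x / (fs y false x + fs y true x).

Definition PrTs_Xs (fs : bool -> bool -> X -> R) (t : bool) (x : X) : R :=
  (fs false t x + fs true t x) / margX fs x.

Definition PrYs1_TsXs (fs : bool -> bool -> X -> R) (t : bool) (x : X) : R :=
  fs true t x / (fs false t x + fs true t x).

(* Observed sample: Y ~ Bernoulli(h0); g y t x = density of (T,X) given Y = y,
   i.e. the density of the distribution P_y. *)
Definition is_obs_density (g : bool -> bool -> X -> R) : Prop :=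
  forall y,
  (forall t x, 0 <= g y t x) /\
  (forall t, measurable_fun setT (g y t)) /\
  (\int[mu]_x (g y false x + g y true x)%:E = 1)%E.

Definition fX_Y (g : bool -> bool -> X -> R) (x : X) (y : bool) : R :=
  g y false x + g y true x.

Definition Pi (g : bool -> bool -> X -> R) (t y : bool) (x : X) : R :=
  g y t x / fX_Y g x y.

(* Pr(Y = 1 | X = x), by Bayes' rule with Pr(Y = 1) = h0 *)
Definition PrY1_X (h0 : R) (g : bool -> bool -> X -> R) (x : X) : R :=
  h0 * fX_Y g x true / (h0 * fX_Y g x true + (1 - h0) * fX_Y g x false).

Definition r (D : design) (h0 : R) (g : bool -> bool -> X -> R) (x : X) (p : R) : R :=
  let q := PrY1_X h0 g x in
  match D with
  | CaseControl =>
      p * (1 - h0) * q / (p * (1 - h0) * q + h0 * (1 - p) * (1 - q))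
  | CasePopulation => p * (1 - h0) / h0 * (q / (1 - q))
  end.

Definition supp_pop (fs : bool -> bool -> X -> R) (x : X) : Prop := 0 < fXs fs x.
Definition supp_obs (g : bool -> bool -> X -> R) (y : bool) (x : X) : Prop :=
  0 < fX_Y g x y.

(* Standing common support assumption; calX := supp_pop fs. *)
Definition common_support fs g : Prop :=
  forall x, (supp_pop fs x <-> supp_obs g false x) /\
            (supp_pop fs x <-> supp_obs g true x).

Definition design_holds (D : design) fs g : Prop :=
  match D with
  | CaseControl =>
      forall t x y, supp_pop fs x ->
        fX_Y g x y = fXs_Ys fs x y /\ Pi g t y x = PrTs_XsYs fs t x y
  | CasePopulation =>
      forall t x, supp_pop fs x ->
        fX_Y g x false = fXs fs x /\ Pi g t false x = PrTs_Xs fs t x /\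
        fX_Y g x true = fXs_Ys fs x true /\ Pi g t true x = PrTs_XsYs fs t x true
  end.

End Defs.

(* Main.v *)
Require Import Defs.
From HB Require Import structures.
From mathcomp Require Import all_boot all_order all_algebra.
From mathcomp Require Import all_classical all_reals all_analysis measurable_realfun.
From mathcomp Require Import ring lra.
Import Order.TTheory GRing.Theory Num.Theory.
Local Open Scope ring_scope.
Lemma PrYs_sum {R : realType} {d : measure_display} {X : measurableType d}
  {mu : {measure set X -> \bar R}} {fs : bool -> bool -> X -> R} :
  is_pop_density mu fs -> PrYs mu fs false + PrYs mu fs true = 1.
Proof.
move=> [f0 [mf i1]].
have mE y : measurable_fun setT (fun x => (fs y false x + fs y true x)%:E).
  by apply/measurable_EFinP; apply: measurable_funD.
have ge y : forall x, (setT : set X) x -> (0 <= (fs y false x + fs y true x)%:E)%E.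
  by move=> x _; rewrite lee_fin addr_ge0.
have e x : margX fs x = (fs false false x + fs false true x) + (fs true false x + fs true true x).
  by rewrite /margX !addrA.
have := i1.
under eq_integral do rewrite e EFinD.
rewrite ge0_integralD //; [|exact: ge..].
rewrite /PrYs.
have := integral_ge0 mu (ge false); have := integral_ge0 mu (ge true).
case: (\int[mu]_x _)%E => [a| |]; case: (\int[mu]_x _)%E => [b| |] //=.
by move=> _ _ [] ->.

Qed.
Lemma alg1 (R : realFieldType) (h a0 a1 P f0 f1 : R) :
  0 < h < 1 -> 0 < a0 -> 0 < a1 -> 0 < P < 1 -> 0 < f0 -> 0 < f1 ->
  let A0 := a0 / (1 - P) in let A1 := a1 / P in
  let q := h * A1 / (h * A1 + (1 - h) * A0) in
  let rr := P * (1 - h) * q / (P * (1 - h) * q + h * (1 - P) * (1 - q)) in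
  f1 / (f0 + f1) = rr * (f1 / a1) / (f0 / a0 + rr * (f1 / a1 - f0 / a0)).
Proof.
move=> /andP[h0 h1] a0p a1p /andP[P0 P1] f0p f1p A0 A1 q rr.
have hP : 0 < 1 - P by lra.
have hh : 0 < 1 - h by lra.
have K0 : 0 < h * a1 * (1 - P) + (1 - h) * a0 * P.
  by apply: addr_gt0; apply: mulr_gt0 => //; apply: mulr_gt0.
have eq : q = h * a1 * (1 - P) / (h * a1 * (1 - P) + (1 - h) * a0 * P).
  rewrite /q /A1 /A0; field.
  by rewrite !lt0r_neq0 //; lra.
have e1q : 1 - q = (1 - h) * a0 * P / (h * a1 * (1 - P) + (1 - h) * a0 * P).
  rewrite eq; field; by rewrite lt0r_neq0.
have er : rr = a1 / (a0 + a1).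
  rewrite /rr e1q eq; field.
  rewrite !lt0r_neq0 //; last lra.
  by apply: addr_gt0; rewrite !mulr_gt0.
rewrite er.
have ed : f0 / a0 + a1 / (a0 + a1) * (f1 / a1 - f0 / a0) = (f0 + f1) / (a0 + a1).
  by field; rewrite !lt0r_neq0 //; lra.
by rewrite ed; field; rewrite !lt0r_neq0 //; lra.
Qed.

Lemma alg2 (R : realFieldType) (h a0 a1 P f0 f1 : R) :
  0 < h < 1 -> 0 <= a0 -> 0 < a1 -> 0 < P -> 0 <= f0 -> 0 < f1 ->
  let A1 := a1 / P in
  let q := h * A1 / (h * A1 + (1 - h) * (a0 + a1)) in
  f1 / (f0 + f1) = P * (1 - h) / h * (q / (1 - q)) * (f1 / a1) /
     ((f0 + f1) / (a0 + a1) + 0 * (1 - h) / h * (q / (1 - q)) * (f1 / a1 - (f0 + f1) / (a0 + a1))).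
Proof.
move=> /andP[h0 h1] a0p a1p P0 f0p f1p A1 q.
have hh : 0 < 1 - h by lra.
have K0 : 0 < h * a1 + (1 - h) * (a0 + a1) * P.
  by apply: addr_gt0; rewrite ?mulr_gt0 //; lra.
have eq : q = h * a1 / (h * a1 + (1 - h) * (a0 + a1) * P).
  rewrite /q /A1; field.
  by rewrite !lt0r_neq0 //; lra.
have e1q : 1 - q = (1 - h) * (a0 + a1) * P / (h * a1 + (1 - h) * (a0 + a1) * P).
  rewrite eq; field; by rewrite lt0r_neq0.
rewrite e1q eq !mul0r addr0.
field.
rewrite !lt0r_neq0 //; try lra.
Qed.

Theorem lemmaA2 (R : realType) (d : measure_display) (X : measurableType d)
  (mu : {measure set X -> \bar R})
  (fs g : bool -> bool -> X -> R) (h0 : R) (D : design) :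
  is_pop_density mu fs ->
  is_obs_density mu g ->
  0 < h0 < 1 ->
  common_support fs g ->
  (forall x, supp_pop fs x -> forall t y, Pi g t y x != 0) ->
  design_holds mu D fs g ->
  let p := match D with CaseControl => p0 mu fs | CasePopulation => 0 end in
  forall (t : bool) (x : X), supp_pop fs x ->
    PrYs1_TsXs fs t x =
      r D h0 g x (p0 mu fs) * Pi g t true x /
      (Pi g t false x + r D h0 g x p * (Pi g t true x - Pi g t false x)).
Proof.
move=> hpop hobs hh hcs hPi hD p t x hx.
have fge : forall y t x, 0 <= fs y t x by case: hpop.
have hPi0 := hPi x hx t false; have hPi1 := hPi x hx t true.
have [[c0 _] [c1 _]] := hcs x.
have g0 := c0 hx; have g1 := c1 hx.
rewrite /supp_obs in g0 g1.
have posq : forall (a b : R), 0 <= a -> 0 < a / b -> 0 < a /\ 0 < b.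
  move=> a b a0 ab.
  have an : a != 0 by apply: contraTneq ab => ->; rewrite mul0r ltxx.
  have ap : 0 < a by rewrite lt_neqAle eq_sym an.
  by split=> //; move: ab; rewrite pmulr_rgt0 // invr_gt0.
have posf : forall y, Pi g t y x != 0 -> Pi g t y x = fs y t x / (fs y false x + fs y true x) -> 0 < fs y t x.
  move=> y hn he; rewrite lt_neqAle fge andbT eq_sym.
  by apply: contraNneq hn => e; rewrite he e mul0r.
rewrite /PrYs1_TsXs /p /r /PrY1_X {p}.
case: D hD => hD /=.
- have [fy0 pi0] := hD t x false hx.
  have [fy1 pi1] := hD t x true hx.
  rewrite fy0 fy1 pi0 pi1 /fXs_Ys.
  rewrite fy0 /fXs_Ys in g0; rewrite fy1 /fXs_Ys in g1.
  have [a0p P0p] := posq _ _ (addr_ge0 (fge _ _ _) (fge _ _ _)) g0.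
  have [a1p P1p] := posq _ _ (addr_ge0 (fge _ _ _) (fge _ _ _)) g1.
  have f0p := posf false hPi0 pi0.
  have f1p := posf true hPi1 pi1.
  have hs := PrYs_sum hpop.
  have -> : PrYs mu fs false = 1 - p0 mu fs by rewrite /p0; lra.
  have Pp : 0 < p0 mu fs < 1 by rewrite /p0; apply/andP; split; lra.
  rewrite /PrTs_XsYs; exact: alg1.
- have [fy0 [pi0 [fy1 pi1]]] := hD t x hx.
  have e : margX fs x = (fs false false x + fs false true x) + (fs true false x + fs true true x).
    by rewrite /margX !addrA.
  rewrite fy0 fy1 pi0 pi1 /fXs_Ys /fXs /PrTs_Xs /PrTs_XsYs e.
  rewrite fy1 /fXs_Ys in g1.
  have [a1p P1p] := posq _ _ (addr_ge0 (fge _ _ _) (fge _ _ _)) g1.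
  have f1p := posf true hPi1 pi1.
  rewrite /p0; apply: alg2 => //; exact: addr_ge0.
Qed.
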